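(* For the conditions (i)–(v) of the context, (i) $\Longleftrightarrow$ (ii) $\Longrightarrow$ (iii) $\Longrightarrow$ (iv) $\Longrightarrow$ (v).
   Context: $X$ is a finite-dimensional real Hilbert space with norm $\|\cdot\|$, $T:X\rightrightarrows X$ is a maximal monotone operator, $\Omega:=T^{-1}(0)$, $\mathbb{B}$ is the closed unit ball, $\mathbb{B}(z;r)$ the closed ball of radius $r$ about $z$, $\operatorname{dist}(0,\emptyset)=+\infty$. Conditions: (i) there exist $r>0,\kappa_r>0$ with $\operatorname{dist}(z,\Omega)\le\kappa_r\|w\|$ for all $w\in\mathbb{B}(0;r)$ and $z\in T^{-1}(w)$; (ii) there exist $r>0,\kappa_r>0$ with $T^{-1}(w)\subset T^{-1}(0)+\kappa_r\|w\|\mathbb{B}$ for all $w\in\mathbb{B}(0;r)$; (iii) for every $r>0$ there exists $\kappa_r>0$ with $\operatorname{dist}(z,\Omega)\le\kappa_r\operatorname{dist}(0,T(z))$ for all $z$ with $\operatorname{dist}(z,\Omega)\le r$; (iv) for every $r>0$ there exists $\kappa_r>0$ with $\operatorname{dist}(z,\Omega)\le\kappa_r\operatorname{dist}(0,T(z))$ for all $z$ with $\|z\|\le r$; (v) there exist $\bar z\in\Omega$, $r>0$, $\kappa_r>0$ with $\operatorname{dist}(z,\Omega)\le\kappa_r\operatorname{dist}(0,T(z))$ for all $z\in\mathbb{B}(\bar z;r)$. *)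

(* Defs.v *)
From HB Require Import structures.
From mathcomp Require Import all_boot all_order all_algebra.
From mathcomp Require Import all_classical all_reals.
From mathcomp Require Import ereal.
Set Implicit Arguments. Unset Strict Implicit. Unset Printing Implicit Defensive.
Import Order.TTheory GRing.Theory Num.Theory.
Local Open Scope classical_set_scope.
Local Open Scope ring_scope.

(* A finite-dimensional real Hilbert space is modelled as a finite-dimensional
   real vector space X : vectType R together with an inner product. *)
Definition is_inner_product (R : realType) (X : vectType R)
  (ip : X -> X -> R) : Prop :=
  [/\ (forall a x y z, ip (a *: x + y) z = a * ip x z + ip y z),
      (forall x y, ip x y = ip y x) &
      (forall x, x != 0 -> 0 < ip x x)].

Section Defs.
Variables (R : realType) (X : vectType R) (ip : X -> X -> R).

Definition ipnorm (x : X) : R := Num.sqrt (ip x x).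

(* dist(z, S) in the extended reals; dist(z, emptyset) = +oo *)
Definition dist (z : X) (S : set X) : \bar R :=
  ereal_inf [set ((ipnorm (z - w))%:E) | w in S].

Definition monotone (T : X -> set X) : Prop :=
  forall x y u v, T x u -> T y v -> 0 <= ip (x - y) (u - v).

Definition maximal_monotone (T : X -> set X) : Prop :=
  monotone T /\
  forall x u, (forall y v, T y v -> 0 <= ip (x - y) (u - v)) -> T x u.

Definition inv_op (T : X -> set X) (w : X) : set X := [set z | T z w].

Definition zeros (T : X -> set X) : set X := inv_op T 0.

Definition cond_i (T : X -> set X) : Prop :=
  exists r, exists kr, [/\ 0 < r, 0 < kr &
    forall w z, ipnorm w <= r -> inv_op T w z ->
      (dist z (zeros T) <= (kr * ipnorm w)%:E)%E].

Definition cond_ii (T : X -> set X) : Prop :=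
  exists r, exists kr, [/\ 0 < r, 0 < kr &
    forall w z, ipnorm w <= r -> inv_op T w z ->
      exists om b, [/\ zeros T om, ipnorm b <= kr * ipnorm w & z = om + b]].

Definition cond_iii (T : X -> set X) : Prop :=
  forall r, 0 < r -> exists kr, 0 < kr /\
    forall z, (dist z (zeros T) <= r%:E)%E ->
      (dist z (zeros T) <= kr%:E * dist 0 (T z))%E.

Definition cond_iv (T : X -> set X) : Prop :=
  forall r, 0 < r -> exists kr, 0 < kr /\
    forall z, ipnorm z <= r ->
      (dist z (zeros T) <= kr%:E * dist 0 (T z))%E.

Definition cond_v (T : X -> set X) : Prop :=
  exists zbar, exists r, exists kr, [/\ zeros T zbar, 0 < r, 0 < kr &
    forall z, ipnorm (z - zbar) <= r ->
      (dist z (zeros T) <= kr%:E * dist 0 (T z))%E].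

End Defs.

(* Main.v *)
Require Import Defs.
From HB Require Import structures.
From mathcomp Require Import all_boot all_order all_algebra.
From mathcomp Require Import all_classical all_reals.
From mathcomp Require Import ereal.
From mathcomp Require Import lra.
Import Order.TTheory GRing.Theory Num.Theory.
Local Open Scope classical_set_scope.
Local Open Scope ring_scope.

Section Helpers.
Context {R : realType} {X : vectType R} {ip : X -> X -> R}.
Hypothesis hip : is_inner_product ip.

Lemma ipD x y z : ip (x + y) z = ip x z + ip y z.
Proof. by case: hip => L _ _; have := L 1 x y z; rewrite scale1r mul1r. Qed.

Lemma ip0l z : ip 0 z = 0.
Proof.
have := ipD 0 0 z; rewrite addr0 => /eqP; rewrite -subr_eq0.
by rewrite opprD addrA subrr sub0r oppr_eq0 => /eqP.
Qed.

Lemma ipNl x z : ip (- x) z = - ip x z.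
Proof. by case: hip => L _ _; have := L (-1) x 0 z; rewrite scaleN1r addr0 ip0l addr0 mulN1r. Qed.

Lemma ipDr x y z : ip z (x + y) = ip z x + ip z y.
Proof. by case: hip => _ S _; rewrite S ipD (S x) (S y). Qed.

Lemma ipNr x z : ip z (- x) = - ip z x.
Proof. by case: hip => _ S _; rewrite S ipNl S. Qed.

Lemma ip_ge0 x : 0 <= ip x x.
Proof.
case: hip => _ _ P; have [->|/P/ltW //] := eqVneq x 0.
by rewrite ip0l.
Qed.

Lemma ipnorm0 : ipnorm ip 0 = 0.
Proof. by rewrite /ipnorm ip0l sqrtr0. Qed.

Lemma ipnorm_ge0 x : 0 <= ipnorm ip x.
Proof. exact: sqrtr_ge0. Qed.

Lemma ipnorm_eq0 x : ipnorm ip x = 0 -> x = 0.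
Proof.
move=> h; apply/eqP; apply/negPn/negP => /(fun H => let: And3 _ _ P := hip in P x H).
have := sqr_sqrtr (ip_ge0 x); rewrite -/(ipnorm ip x) h expr0n /= => <-.
by rewrite ltxx.
Qed.

Lemma ipnorm_sq x : ipnorm ip x ^+ 2 = ip x x.
Proof. exact: sqr_sqrtr (ip_ge0 x). Qed.

Lemma parallelogram a b :
  ip (a - b) (a - b) + ip (a + b) (a + b) = 2 * ip a a + 2 * ip b b.
Proof.
rewrite !ipD !ipDr !ipNl !ipNr.
case: hip => _ S _; rewrite (S b a); lra.
Qed.

Lemma norm_bound a b r1 r2 : ipnorm ip a <= r1 -> ipnorm ip b <= r2 ->
  ipnorm ip (a - b) <= Num.sqrt (2 * r1 ^+ 2 + 2 * r2 ^+ 2)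
  /\ ipnorm ip (a + b) <= Num.sqrt (2 * r1 ^+ 2 + 2 * r2 ^+ 2).
Proof.
move=> ha hb.
have ha2 : ip a a <= r1 ^+ 2.
  by rewrite -ipnorm_sq; apply: lerXn2r => //; rewrite ?nnegrE ?ipnorm_ge0 //;
     apply: le_trans ha; apply: ipnorm_ge0.
have hb2 : ip b b <= r2 ^+ 2.
  by rewrite -ipnorm_sq; apply: lerXn2r => //; rewrite ?nnegrE ?ipnorm_ge0 //;
     apply: le_trans hb; apply: ipnorm_ge0.
have := parallelogram a b; have := ip_ge0 (a - b); have := ip_ge0 (a + b) => h1 h2 hp.
split; apply: ler_wsqrtr; lra.
Qed.

Lemma ipnormN x : ipnorm ip (- x) = ipnorm ip x.
Proof. by rewrite /ipnorm ipNl ipNr opprK. Qed.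

Lemma dist_le z (S : set X) w : S w -> (dist ip z S <= (ipnorm ip (z - w))%:E)%E.
Proof. by move=> Sw; apply: ereal_inf_lbound; exists w. Qed.

End Helpers.
Theorem lemma1 (R : realType) (X : vectType R) (ip : X -> X -> R)
  (T : X -> set X) :
  is_inner_product ip ->
  maximal_monotone ip T ->
  zeros T !=set0 ->
  [/\ (cond_i ip T <-> cond_ii ip T),
      (cond_ii ip T -> cond_iii ip T),
      (cond_iii ip T -> cond_iv ip T) &
      (cond_iv ip T -> cond_v ip T)].
Proof.
move=> hip _ [w0 Hw0].
split.
- split.
  + case=> r [kr [r0 kr0 H]]; exists r, (2 * kr); split => //; first by rewrite mulr_gt0.
    move=> w z hw Tz.
    have [Ew|wn0] := eqVneq w 0.
      rewrite Ew in Tz *.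
      exists z, 0; split; [exact: Tz | by rewrite (ipnorm0 hip) mulr0 | by rewrite addr0].
    have np : 0 < ipnorm ip w.
      rewrite lt_def ipnorm_ge0 andbT; apply/eqP => /(ipnorm_eq0 hip) h.
      by rewrite h eqxx in wn0.
    have : (dist ip z (zeros T) < (2 * kr * ipnorm ip w)%:E)%E.
      apply: le_lt_trans (H _ _ hw Tz) _; rewrite lte_fin.
      have := mulr_gt0 kr0 np; nra.
    case/ereal_inf_lt => _ [om Zom <-]; rewrite lte_fin => hlt.
    exists om, (z - om); split => //; first exact: ltW.
    by rewrite addrC subrK.
  + case=> r [kr [r0 kr0 H]]; exists r, kr; split => // w z hw Tz.
    case: (H w z hw Tz) => om [b [Zom hb Ez]].
    apply: le_trans (dist_le _ _ _ Zom) _.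
    by rewrite Ez (addrC om b) addrK lee_fin.
- case=> r0 [k0 [r0p k0p H]] r rp.
  exists (Num.max k0 (r / r0)); split; first by rewrite lt_max k0p.
  move=> z hz.
  set kr := Num.max k0 (r / r0).
  have krp : 0 < kr by rewrite lt_max k0p.
  case E: (dist ip z (zeros T)) => [d| |]; last by rewrite leNye.
    2: by rewrite E in hz.
  rewrite E lee_fin in hz.
  have key : ((d / kr)%:E <= dist ip 0 (T z))%E.
    apply/ereal_infP => _ [w Tw <-].
    rewrite sub0r (ipnormN hip) lee_fin ler_pdivrMr // [_ * kr]mulrC.
    have hk0 : k0 <= kr by rewrite le_max lexx.
    have hk1 : r / r0 <= kr by rewrite le_max lexx orbT.
    have ng := ipnorm_ge0 w.
    have [hw|hw] := leP (ipnorm ip w) r0.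
      case: (H w z hw Tw) => om [b [Zom hb Ez]].
      have zb : z - om = b by rewrite Ez (addrC om b) addrK.
      have := @dist_le _ _ ip z _ _ Zom; rewrite E zb lee_fin => h.
      apply: le_trans h _; apply: le_trans hb _; exact: ler_wpM2r.
    apply: le_trans hz _.
    have : r <= r / r0 * ipnorm ip w.
      rewrite -{1}(divfK (lt0r_neq0 r0p) r); apply: ler_wpM2l; last exact: ltW.
      by rewrite divr_ge0 // ltW.
    move=> h; apply: le_trans h _; exact: ler_wpM2r.
  have := lee_wpmul2l (x := kr%:E) _ key.
  rewrite lee_fin (ltW krp) -EFinM mulrC divfK //; last by rewrite gt_eqF.
  by move=> /(_ isT).
- move=> H r rp.
  set r' := Num.sqrt (2 * r ^+ 2 + 2 * ipnorm ip w0 ^+ 2).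
  have r'p : 0 < r'.
    rewrite sqrtr_gt0; have := sqr_ge0 (ipnorm ip w0); have := mulr_gt0 rp rp; nra.
  case: (H r' r'p) => kr [krp Hk]; exists kr; split => // z hz.
  apply: Hk; apply: le_trans (dist_le _ _ _ Hw0) _; rewrite lee_fin.
  exact: (norm_bound hip _ _ _ _ hz (lexx (ipnorm ip w0))).1.
- move=> H.
  set r' := Num.sqrt (2 * 1 ^+ 2 + 2 * ipnorm ip w0 ^+ 2).
  have r'p : 0 < r'.
    rewrite sqrtr_gt0; have := sqr_ge0 (ipnorm ip w0); nra.
  case: (H r' r'p) => kr [krp Hk]; exists w0, 1, kr; split => // z hz.
  apply: Hk.
  by have := (norm_bound hip _ _ _ _ hz (lexx (ipnorm ip w0))).2; rewrite subrK.
Qed.
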